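(* Let $k\geq 1$ and let $T$ be a binary phylogenetic $X$-tree with $|X| = 2k$. Let $P_1,\ldots,P_k$ be pairwise edge-disjoint leaf-to-leaf paths in $T$, where $P_i$ has endpoints $a_i,b_i$. For $p=(p_1,\ldots,p_k)\in\{0,1\}^k$ define $f_p: X\to\{a,b\}$ by $f_p(v)=a$ if for some $i\in\{1,\dots,k\}$ either ($v=a_i$ and $p_i=0$) or ($v=b_i$ and $p_i=1$), and $f_p(v)=b$ otherwise. Then the map $p\mapsto f_p$ is a bijection from $\{0,1\}^k$ to $A_k(T)$.
   Context: A phylogenetic $X$-tree is a tree with no vertices of degree 2 whose leaves are bijectively labelled by (and identified with) $X$; binary means maximum degree 3. A leaf-to-leaf path is a path whose two endpoints are (distinct) leaves. For a binary character $f: X\to\{a,b\}$, $l(f,T)$ is the minimum, over all maps $g:V(T)\to\{a,b\}$ with $g|_X=f$, of the number of edges $\{u,v\}$ with $g(u)\ne g(v)$; $A_k(T)$ is the set of all binary characters $f$ on $X$ with $l(f,T)=k$. *)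

(* Defs.v *)
From mathcomp Require Import all_boot.
Set Implicit Arguments. Unset Strict Implicit. Unset Printing Implicit Defensive.

Section Defs.
Variables (V : finType) (e : rel V).

Definition simple_graph : Prop := symmetric e /\ irreflexive e.

Definition deg (v : V) : nat := #|[set u | e v u]|.

Definition connected_graph : Prop := forall u v, connect e u v.
Definition acyclic : Prop := forall s : seq V, uniq s -> 3 <= size s -> ~~ cycle e s.
Definition is_tree : Prop := simple_graph /\ connected_graph /\ acyclic.

Definition is_leaf (v : V) : bool := deg v == 1.

Definition binary_phylo_tree : Prop :=
  is_tree /\ (forall v, deg v != 2) /\ (forall v, deg v <= 3).

End Defs.

(* The leaf set X, identified with the labels (a finType by subtyping). *)
Notation leafT e := {v | is_leaf e v}.

Section Defs2.
Variables (V : finType) (e : rel V).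

Definition edges : {set {set V}} :=
  [set [set x.1; x.2] | x in [pred x : V * V | e x.1 x.2]].

Definition changes (g : V -> bool) : nat :=
  #|[set E in edges | [exists u in E, exists v in E, g u != g v]]|.

(* Binary characters are maps X -> bool (true = state a, false = state b).
   Parsimony score l(f,T): minimum of changes g over extensions g of f.
   (#|edges| is an upper bound for every term, so it is a neutral start.) *)
Definition extends (g : {ffun V -> bool}) (f : {ffun leafT e -> bool}) : bool :=
  [forall x : leafT e, g (val x) == f x].

Definition pscore (f : {ffun leafT e -> bool}) : nat :=
  \big[minn/#|edges|]_(g : {ffun V -> bool} | extends g f) changes g.

Definition edge_of (s : seq V) (u v : V) : bool :=
  ((u, v) \in zip s (behead s)) || ((v, u) \in zip s (behead s)).

Definition leaf_path (s : seq V) (x y : leafT e) : Prop :=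
  val x != val y /\
  exists t, s = val x :: t /\ path e (val x) t /\ uniq s /\ last (val x) t = val y.

Definition fchar (k : nat) (a b : 'I_k -> leafT e) (p : {ffun 'I_k -> bool})
  : {ffun leafT e -> bool} :=
  [ffun v => [exists i, ((v == a i) && ~~ p i) || ((v == b i) && p i)]].

End Defs2.

(* Main.v *)
Require Import Defs.
From mathcomp Require Import all_boot fingraph zify.
Set Implicit Arguments. Unset Strict Implicit. Unset Printing Implicit Defensive.

Lemma connect_closed (T : finType) (r : rel T) (Pr : pred T) x y :
  Pr x -> (forall u v, Pr u -> r u v -> Pr v) -> connect r x y -> Pr y.
Proof.
move=> Px H /connectP [s]; elim: s x Px => [|z s IH] x Px /=; first by move=> _ ->.
by case/andP=> rxz ps yl; exact: (IH z (H _ _ Px rxz) ps yl).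
Qed.

Lemma bigmin_le_seq (I : eqType) (s : seq I) (P : pred I) (F : I -> nat) m i0 :
  i0 \in s -> P i0 -> \big[minn/m]_(i <- s | P i) F i <= F i0.
Proof.
elim: s => [//|j s IH]; rewrite inE big_cons => /orP [/eqP <-|H] Pi.
  by rewrite Pi geq_minl.
case: (P j); last exact: IH.
by apply: leq_trans (geq_minr _ _) (IH H Pi).
Qed.

Lemma bigmin_le (I : finType) (P : pred I) (F : I -> nat) m i0 :
  P i0 -> \big[minn/m]_(i | P i) F i <= F i0.
Proof. by move=> Pi; apply: bigmin_le_seq => //; rewrite mem_index_enum. Qed.

Lemma bigmin_ge (I : finType) (P : pred I) (F : I -> nat) m n :
  n <= m -> (forall i, P i -> n <= F i) -> n <= \big[minn/m]_(i | P i) F i.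
Proof.
move=> nm H; apply: (big_ind (fun x => n <= x)) => // x y nx ny.
by rewrite leq_min nx ny.
Qed.

Lemma path_change (T : eqType) (g : T -> bool) x t :
  g x != g (last x t) -> exists2 uv, uv \in zip (x :: t) t & g uv.1 != g uv.2.
Proof.
elim: t x => [|y t IH] x /=; first by rewrite eqxx.
case E: (g x != g y).
  by move=> _; exists (x, y); rewrite ?inE ?eqxx.
move/negbFE/eqP: E => ->; case/IH => uv H1 H2; exists uv => //.
by rewrite inE H1 orbT.
Qed.

Lemma path_zip_e (T : eqType) (e : rel T) x t uv :
  path e x t -> uv \in zip (x :: t) t -> e uv.1 uv.2.
Proof.
elim: t x => [|y t IH] x //= /andP [exy pt]; rewrite inE => /orP [/eqP -> //|].
exact: IH.
Qed.

Lemma last_pair (T : eqType) (x : T) t : t != [::] ->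
  exists w, (w, last x t) \in zip (x :: t) t.
Proof.
elim: t x => [//|z t IH] x _; case: t IH => [|z' t] IH.
  by exists x; rewrite /= inE eqxx.
have [w Hw] := IH z isT; exists w; by rewrite /= inE Hw orbT.
Qed.

Lemma edge_ofC (T : finType) (s : seq T) u v : edge_of s u v = edge_of s v u.
Proof. by rewrite /edge_of orbC. Qed.

Lemma zip_nth (T : eqType) (x0 x : T) t j : j < size t ->
  (nth x0 (x :: t) j, nth x0 t j) \in zip (x :: t) t.
Proof.
elim: t x j => [//|z t IH] x [|j] /=; first by rewrite inE eqxx.
by rewrite ltnS => H; rewrite inE (IH z j H) orbT.
Qed.

Lemma search (g : nat -> bool) m : g 0 -> ~~ g m -> exists j, [/\ j < m, g j & ~~ g j.+1].
Proof.
elim: m => [->//|m IH] g0 gm.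
case E: (g m); first by exists m.
have [j [jm gj gj1]] := IH g0 (negbT E); exists j; split => //; exact: ltnW.
Qed.

Lemma fin_arith (k bd Tc FW TW Tj Fj T1 F1 : nat) :
  bd <= 1 -> TW + Tc = k -> TW = Tj + (k - T1) -> FW = Fj + (k - F1) -> Fj < Tj -> T1 < F1 ->
  Tj <= k -> Fj <= k -> T1 <= k -> F1 <= k -> bd + (Tc + FW) < k.
Proof. lia. Qed.

Section Big.
Variables (V : finType) (e : rel V).
Hypothesis esym : symmetric e.
Hypothesis eirr : irreflexive e.
Hypothesis conn : connected_graph e.
Hypothesis acyc : acyclic e.
Definition rm (p q : V) : rel V :=
  [rel x y | e x y && ~~ (((x == p) && (y == q)) || ((x == q) && (y == p)))].
Definition side p q := [set w | connect (rm p q) p w].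

Lemma rm_sym p q : symmetric (rm p q).
Proof.
move=> x y; rewrite /rm /= esym; congr (_ && ~~ _).
by case: (x == p); case: (y == q); case: (x == q); case: (y == p).
Qed.

Lemma rm_sub p q : subrel (rm p q) e.
Proof. by move=> x y /andP []. Qed.

Lemma side_refl p q : p \in side p q.
Proof. by rewrite inE connect0. Qed.

Lemma side_notin p q : e p q -> q \notin side p q.
Proof.
move=> epq; rewrite inE; apply/negP => /connectP [s ps lq].
move: lq; case: (shortenP ps) => s' ps' us' _ ls'.
case: s' ps' us' ls' => [|z s'] /=; first by move=> _ _ pq; rewrite pq eirr in epq.
case/andP => rpz ps'; case: s' ps' => [|w s''].
  move=> _ _ /= zq; move: rpz; rewrite -zq /rm /= !eqxx. by rewrite andbF.
move=> ps' us' ls'.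
have := @acyc [:: p, z, w & s''] us' isT; apply/negP; apply/negPn.
rewrite /cycle rcons_path; apply/andP; split.
  by apply: (sub_path (@rm_sub p q)); rewrite /= rpz.
by move: ls' => /= <-; rewrite esym.
Qed.

Lemma side_step p q u v : u \in side p q -> e u v ->
  ~~ (((u == p) && (v == q)) || ((u == q) && (v == p))) -> v \in side p q.
Proof.
rewrite !inE => pu euv ne; apply: connect_trans pu _; apply: connect1.
by rewrite /rm /= euv ne.
Qed.

Lemma side_cover p q w : e p q -> (w \in side p q) || (w \in side q p).
Proof.
move=> epq; apply: (@connect_closed _ e [pred x | (x \in side p q) || (x \in side q p)] p); last exact: conn.
  by rewrite /= side_refl.
move=> u v /orP [] uin euv.
  case E: (((u == p) && (v == q)) || ((u == q) && (v == p))).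
    by case/orP: E => /andP [_ /eqP ->]; apply/orP; (by left; apply: side_refl) || (by right; apply: side_refl).
  by rewrite /= (side_step uin euv) ?E.
case E: (((u == q) && (v == p)) || ((u == p) && (v == q))).
  by case/orP: E => /andP [_ /eqP ->]; apply/orP; (by left; apply: side_refl) || (by right; apply: side_refl).
by rewrite /= (side_step uin euv) ?E ?orbT.
Qed.

Lemma side_disj p q w : e p q -> w \in side p q -> w \in side q p -> False.
Proof.
move=> epq; rewrite !inE => pw qw.
have sy := sym_connect_sym (@rm_sym p q).
have rq : rm q p =2 rm p q.
  by move=> x y; rewrite /rm /= orbC.
have qw' : connect (rm p q) q w by rewrite (eq_connect rq) in qw.
have : connect (rm p q) p q by apply: connect_trans pw _; rewrite sy.
by move: (side_notin epq); rewrite inE => /negP.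
Qed.

Lemma side_mono p q r : e p q -> e q r -> p != r -> {subset side p q <= side q r}.
Proof.
move=> epq eqr npr w; rewrite inE => pw.
suff: (w \in side p q) && (w \in side q r) by case/andP.
apply: (@connect_closed _ (rm p q) [pred x | (x \in side p q) && (x \in side q r)] p w _ _ pw).
  rewrite /= side_refl /=; rewrite inE; apply: connect1; rewrite /rm /= esym epq /=.
  have nqr : q != r by apply/eqP=> E; move: eqr; rewrite E eirr.
  by rewrite eqxx (negbTE npr) (negbTE nqr).
move=> u v /andP [up uq] ruv.
have vp : v \in side p q by rewrite inE; apply: connect_trans (connect1 ruv); rewrite -inE.
rewrite /= vp /=.
case E: (((u == q) && (v == r)) || ((u == r) && (v == q))).
  case/orP: E => /andP [/eqP uq' /eqP vq'].
    by move: up (side_notin epq); rewrite uq' => ->.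
  by move: vp (side_notin epq); rewrite vq' => ->.
by rewrite (side_step uq (rm_sub ruv)) ?E.
Qed.


Lemma leaf_uniq v u u' : is_leaf e v -> e v u -> e v u' -> u = u'.
Proof.
rewrite /is_leaf /deg => /cards1P [w Hw] evu evu'.
have : u \in [set u | e v u] by rewrite inE.
have : u' \in [set u | e v u] by rewrite inE.
by rewrite Hw !inE => /eqP -> /eqP ->.
Qed.

Lemma leaf_nb v : is_leaf e v -> exists u, e v u.
Proof.
rewrite /is_leaf /deg => /cards1P [w Hw].
have : w \in [set u | e v u] by rewrite Hw set11.
by rewrite inE; exists w.
Qed.

Definition nb (l : leafT e) : V := odflt (val l) [pick u | e (val l) u].

Lemma nbP (l : leafT e) u : e (val l) u -> nb l = u.
Proof.
move=> elu; rewrite /nb; case: pickP => [u' H|/(_ u)]; last by rewrite elu.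
by rewrite /= (leaf_uniq (valP l) H elu).
Qed.


Lemma side_leaf p q : is_leaf e p -> e p q -> side p q = [set p].
Proof.
move=> lp epq; apply/setP => w; rewrite !inE; apply/idP/idP; last by move/eqP ->.
case/connectP => [[|z s] /=]; first by move=> _ ->.
by case/andP => /andP [epz]; rewrite (leaf_uniq lp epz epq) !eqxx /=.
Qed.

Lemma path_rm p q x t : path e x t ->
  (forall uv, uv \in zip (x :: t) t -> ~~ (((uv.1 == p) && (uv.2 == q)) || ((uv.1 == q) && (uv.2 == p)))) ->
  path (rm p q) x t.
Proof.
elim: t x => [//|z t IH] x /= /andP [exz pt] H.
rewrite /rm /= exz (H (x, z)) ?inE ?eqxx //=.
by apply: IH => // uv uvin; apply: H; rewrite inE uvin orbT.
Qed.

Section WithF.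
Variable f : {ffun leafT e -> bool}.

Definition gW (W : {set V}) : {ffun V -> bool} :=
  [ffun v => if (insub v : option (leafT e)) is Some l then f l else v \in W].

Lemma gW_ext W : extends (gW W) f.
Proof. by apply/forallP => x; rewrite ffunE valK. Qed.

Definition bd (W : {set V}) : {set {set V}} :=
  [set E in edges e | [exists u in E, exists v in E, (u \in W) != (v \in W)]].
Definition bad (W : {set V}) : {set leafT e} := [set l | f l != (val l \in W)].
Definition hl (l : leafT e) : {set V} := [set val l; nb l].

Lemma changes_gW W : changes e (gW W) <= #|bd W| + #|bad W|.
Proof.
rewrite /changes.
apply: (@leq_trans #|bd W :|: hl @: bad W|).
  apply: subset_leq_card; apply/subsetP => E; rewrite inE => /andP [Eed]; rewrite inE.
  move: (Eed); rewrite /edges => /imsetP [[x1 x2] /= ex EE]; subst E; move=> /existsP [u /andP [uE /existsP [v /andP [vE guv]]]].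
  have gx : gW W x1 != gW W x2.
    apply: contraNneq guv => gx.
    by move: uE vE; rewrite !inE => /orP [] /eqP -> /orP [] /eqP ->; rewrite ?gx.
  case M: ((x1 \in W) != (x2 \in W)).
    apply/orP; left; rewrite /bd inE Eed /=; apply/existsP; exists x1; rewrite set21 /=.
    by apply/existsP; exists x2; rewrite set22.
  move/negbFE/eqP: M => M; apply/orP; right; apply/imsetP.
  move: gx; rewrite !ffunE.
  case: insubP => [l1 L1 v1|N1]; case: insubP => [l2 L2 v2|N2].
  - move=> fl.
    case B1: (f l1 != (val l1 \in W)).
      exists l1; first by rewrite inE B1.
      by rewrite /hl v1 (@nbP l1 x2) // v1.
    exists l2; first by rewrite inE v2 -M -v1 -(eqP (negbFE B1)) eq_sym.
    by rewrite /hl v2 (@nbP l2 x1) ?v2 1?esym // setUC.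
  - move=> fl; exists l1; first by rewrite inE v1 M.
    by rewrite /hl v1 (@nbP l1 x2) // v1.
  - move=> fl; exists l2; first by rewrite inE v2 -M eq_sym.
    by rewrite /hl v2 (@nbP l2 x1) ?v2 1?esym // setUC.
  - by rewrite M eqxx.
rewrite cardsU; apply: leq_trans (leq_subr _ _) _.
by rewrite leq_add2l leq_imset_card.
Qed.

Lemma changes_le_edges g : changes e g <= #|edges e|.
Proof. by apply: subset_leq_card; apply/subsetP => E; rewrite inE => /andP []. Qed.

Lemma pscore_le g : extends g f -> pscore f <= changes e g.
Proof. by move=> H; apply: bigmin_le. Qed.

Lemma pscore_ge n : (forall g, extends g f -> n <= changes e g) ->
  (exists g, extends g f) -> n <= pscore f.
Proof.
move=> H [g0 g0f]; apply: bigmin_ge => //.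
by apply: leq_trans (H _ g0f) (changes_le_edges _).
Qed.

End WithF.

Variables (k : nat) (a b : 'I_k -> leafT e) (P : 'I_k -> seq V).
Hypothesis hcard : #|{: leafT e}| = 2 * k.
Hypothesis hlp : forall i, leaf_path (P i) (a i) (b i).
Hypothesis hdisj : forall i j, i != j -> forall u v, ~~ (edge_of (P i) u v && edge_of (P j) u v).

Definition ep (ic : 'I_k * bool) : leafT e := if ic.2 then b ic.1 else a ic.1.

Lemma end_edge ic : exists u, e (val (ep ic)) u && edge_of (P ic.1) (val (ep ic)) u.
Proof.
case: ic => i c; have [nab [t [-> [pt [ut lt]]]]] := hlp i; rewrite /ep /=.
case: c.
  have tn : t != [::] by apply: contraNneq nab => tn; rewrite -lt tn.
  have [w Hw] := last_pair (val (a i)) tn.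
  exists w; rewrite -lt; apply/andP; split.
    by rewrite esym; exact: (path_zip_e pt Hw).
  by rewrite edge_ofC /edge_of Hw.
case: t pt ut lt => [|z t] pt ut lt; first by rewrite -lt eqxx in nab.
exists z; apply/andP; split; first by case/andP: pt.
by rewrite /edge_of /= inE eqxx.
Qed.

Lemma ep_inj : injective ep.
Proof.
move=> [i c] [j c'] E.
have [u /andP [eu Hu]] := end_edge (i, c).
have [u' /andP [eu' Hu']] := end_edge (j, c').
rewrite E in eu Hu.
have uu : u = u' by apply: (leaf_uniq (valP (ep (j, c'))) eu eu').
subst u'.
case: (eqVneq i j) => [ij|nij]; last by have := hdisj nij (val (ep (j, c'))) u; rewrite Hu Hu'.
subst j; suff -> : c = c' by [].
move: E; rewrite /ep /=; have [nab _] := hlp i; clear Hu Hu' eu eu'.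
by case: c; case: c' => // E; rewrite E eqxx in nab.
Qed.

Lemma ep_bij : bijective ep.
Proof. by apply: (inj_card_bij ep_inj); rewrite hcard card_prod card_ord card_bool mulnC. Qed.

Lemma ep_surj l : exists ic, l = ep ic.
Proof. by have [g _ gK] := ep_bij; exists (g l); rewrite gK. Qed.

Lemma a_inj : injective a.
Proof. by move=> i j E; have := @ep_inj (i, false) (j, false); rewrite /ep /= E => /(_ erefl) [->]. Qed.
Lemma b_inj : injective b.
Proof. by move=> i j E; have := @ep_inj (i, true) (j, true); rewrite /ep /= E => /(_ erefl) [->]. Qed.
Lemma a_neq_b i j : a i != b j.
Proof. by apply/eqP => E; have := @ep_inj (i, false) (j, true); rewrite /ep /= E => /(_ erefl). Qed.

Lemma fchar_a p i : fchar a b p (a i) = ~~ p i.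
Proof.
rewrite ffunE; apply/existsP/idP => [[j /orP [/andP [/eqP /a_inj -> //]|/andP [E _]]]|H].
  by rewrite (negbTE (a_neq_b i j)) in E.
by exists i; rewrite eqxx H.
Qed.

Lemma fchar_b p i : fchar a b p (b i) = p i.
Proof.
rewrite ffunE; apply/existsP/idP => [[j /orP [/andP [E _]|/andP [/eqP /b_inj -> //]]]|H].
  by rewrite eq_sym (negbTE (a_neq_b j i)) in E.
by exists i; rewrite eqxx H orbT.
Qed.

Lemma fchar_inj : injective (fchar a b).
Proof.
move=> p1 p2 E; apply/ffunP => i.
by have := fchar_a p1 i; rewrite E fchar_a => /(congr1 negb); rewrite !negbK.
Qed.

Lemma fchar_true p : #|[set l | fchar a b p l]| = k.
Proof.
pose sel i := if p i then b i else a i.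
have -> : [set l | fchar a b p l] = sel @: setT.
  apply/setP => l; rewrite inE; apply/idP/imsetP.
    rewrite ffunE => /existsP [j /orP [] /andP [/eqP -> pj]]; exists j => //; rewrite /sel.
      by rewrite (negbTE pj).
    by rewrite pj.
  by move=> [j _ ->]; rewrite /sel; case: ifP => pj; rewrite ?fchar_a ?fchar_b ?pj.
rewrite card_imset ?cardsT ?card_ord // => i j; rewrite /sel.
case: (p i); case: (p j) => E.
- exact: b_inj.
- by have := a_neq_b j i; rewrite E eqxx.
- by have := a_neq_b i j; rewrite E eqxx.
- exact: a_inj.
Qed.

Lemma lower_bound (f : {ffun leafT e -> bool}) (g : {ffun V -> bool}) :
  extends g f -> #|[set i | f (a i) != f (b i)]| <= changes e g.
Proof.
move=> /forallP ext.
pose pk i := [pick uv | (uv \in zip (P i) (behead (P i))) && (g uv.1 != g uv.2)].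
pose hE i := if pk i is Some uv then [set uv.1; uv.2] else set0.
have pkS i : f (a i) != f (b i) -> exists2 uv, pk i = Some uv &
    [&& uv \in zip (P i) (behead (P i)), g uv.1 != g uv.2 & e uv.1 uv.2].
  move=> fab; rewrite /pk; case: pickP => [uv /andP [H1 H2]|].
    have [_ [t [Pt [pt _]]]] := hlp i.
    exists uv => //; rewrite H1 H2 /=; rewrite Pt in H1; exact: (path_zip_e pt H1).
  have [_ [t [Pt [pt [_ lt]]]]] := hlp i.
  have := ext (a i); have := ext (b i); rewrite -lt => /eqP gb /eqP ga.
  rewrite -ga -gb in fab; have [uv H1 H2] := path_change fab.
  by move/(_ uv); rewrite Pt /= H1 H2.
rewrite -(@card_in_imset _ _ hE); last first.
  move=> i j; rewrite !inE => /pkS [uv pi /and3P [zi gi _]] /pkS [uv' pj /and3P [zj gj _]].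
  rewrite /hE pi pj => E.
  apply/eqP; apply: contraT => nij; have := hdisj nij uv.1 uv.2.
  have u1 : uv.1 \in [set uv'.1; uv'.2] by rewrite -E set21.
  have u2 : uv.2 \in [set uv'.1; uv'.2] by rewrite -E set22.
  have ne : uv.1 != uv.2 by apply: contraNneq gi => ->.
  have ei : edge_of (P i) uv.1 uv.2 by rewrite /edge_of -surjective_pairing zi.
  rewrite ei /= => /negP H; exfalso; apply: H.
  move: u1 u2 ne; rewrite !inE => /orP [] /eqP E1 /orP [] /eqP E2 //; rewrite ?E1 ?E2 ?eqxx //.
  - by rewrite /edge_of -surjective_pairing zj.
  - by rewrite /edge_of -surjective_pairing zj orbT.
apply: subset_leq_card; apply/subsetP => E /imsetP [i]; rewrite inE => /pkS [uv pi /and3P [_ gi ei]] ->.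
rewrite /hE pi inE; apply/andP; split.
  by apply/imsetP; exists uv.
apply/existsP; exists uv.1; rewrite set21 /=; apply/existsP; exists uv.2; by rewrite set22.
Qed.


Hypothesis deg3 : forall v, deg e v <= 3.

Section Main.
Variable f : {ffun leafT e -> bool}.
Hypothesis hT : #|[set l | f l]| = k.
Hypothesis hF : #|[set l | ~~ f l]| = k.

Definition cnt (c : bool) (S : {set V}) := #|[set l : leafT e | (f l == c) && (val l \in S)]|.

Lemma cnt_all c : #|[set l | f l == c]| = k.
Proof.
case: c; [rewrite -hT|rewrite -hF]; apply: eq_card => l; rewrite !inE.
  by case: (f l).
by case: (f l).
Qed.

Lemma cnt_split c S : cnt c S + cnt c (~: S) = k.
Proof.
rewrite -(cnt_all c) -(cardsID [set l : leafT e | val l \in S]); congr (_ + _); apply: eq_card => l;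
  by rewrite !inE andbC.
Qed.

Lemma cnt_tot S : cnt true S + cnt false S = #|[set l : leafT e | val l \in S]|.
Proof.
rewrite -(cardsID [set l : leafT e | f l] [set l : leafT e | val l \in S]); congr (_ + _);
  apply: eq_card => l; rewrite !inE; case: (f l) => //=; by rewrite andbC.
Qed.

Lemma cnt_ext c (S S' : {set V}) : (forall l : leafT e, (val l \in S) = (val l \in S')) -> cnt c S = cnt c S'.
Proof. by move=> H; apply: eq_card => l; rewrite !inE H. Qed.

Lemma bad_cnt W : #|bad f W| = cnt true (~: W) + cnt false W.
Proof.
rewrite -cardsUI.
have -> : [set l : leafT e | (f l == true) && (val l \in ~: W)] :&: [set l | (f l == false) && (val l \in W)] = set0.
  by apply/setP => l; rewrite !inE; case: (f l); case: (val l \in W).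
rewrite cards0 addn0; apply: eq_card => l; rewrite !inE.
by case: (f l); case: (val l \in W).
Qed.

Lemma bdC W : bd (~: W) = bd W.
Proof.
apply/setP => E; rewrite !inE; congr (_ && _); apply: eq_existsb => u; congr (_ && _);
apply: eq_existsb => v; rewrite !inE; by case: (u \in W); case: (v \in W).
Qed.

Lemma construct i0 : f (a i0) = f (b i0) -> exists g, extends g f /\ changes e g < k.
Proof.
move=> fab.
have [nab [t [Pt [pt [ut lt]]]]] := hlp i0.
set x := val (a i0) in nab Pt pt ut lt.
set n := size t.
pose v j := nth x (x :: t) j.
have tn : 0 < n.
  by rewrite lt0n size_eq0; apply: contraNneq nab => tn; rewrite -lt tn.
have ev j : j < n -> e (v j) (v j.+1) by move=> jn; exact: (pathP x pt) j jn.
have vinj i j : i <= n -> j <= n -> (v i == v j) = (i == j).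
  move=> i_n j_n; apply: nth_uniq.
all: try (rewrite /= ltnS; done).
  by rewrite -Pt.
have vn : v n = val (b i0) by rewrite -lt /v; have := nth_last x (x :: t); rewrite /= => ->.
have edgeX j : j < n -> edge_of (P i0) (v j) (v j.+1).
  by move=> jn; rewrite /edge_of Pt /= zip_nth.
have nleaf j : 0 < j < n -> ~~ is_leaf e (v j).
  case/andP=> j0 jn; apply/negP => lj.
  have e1 : e (v j) (v j.-1) by rewrite esym; have := ev j.-1; rewrite prednK //; apply; exact: ltnW.
  have := leaf_uniq lj e1 (ev j jn) => /eqP; rewrite vinj; [lia|lia|lia].
pose A j := side (v j) (v j.+1).
pose B j := side (v j.+1) (v j).
have cov j w : j < n -> (w \in A j) || (w \in B j) by move=> jn; exact: side_cover (ev j jn).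
have dis j w : j < n -> w \in A j -> w \in B j -> False by move=> jn; exact: side_disj (ev j jn).
have compAB j w : j < n -> (w \in A j) = (w \notin B j).
  move=> jn; apply/idP/idP => H; first by apply/negP => H'; exact: dis j w jn H H'.
  by move: (cov j w jn); rewrite (negbTE H) orbF.
have monoA j : j.+1 < n -> {subset A j <= A j.+1}.
  move=> jn; apply: side_mono; [apply: ev; lia|apply: ev; lia|rewrite vinj; lia].
have monoB j : j.+1 < n -> {subset B j.+1 <= B j}.
  move=> jn; apply: side_mono; [rewrite esym; apply: ev; lia|rewrite esym; apply: ev; lia|rewrite vinj; lia].
have xA j : j < n -> x \in A j.
  elim: j => [|j IH] jn; first exact: side_refl.
  apply: monoA => //; apply: IH; lia.
have yB j : j < n -> val (b i0) \in B j.
  have gen d : forall j, j + d = n.-1 -> val (b i0) \in B j.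
    elim: d => [|d IH] j' jd.
      have -> : j' = n.-1 by lia.
      by rewrite /B prednK // vn side_refl.
    apply: monoB; first lia.
    apply: IH; lia.
  move=> jn; apply: (gen (n.-1 - j)); lia.
have A0 (l : leafT e) : (val l \in A 0) = (l == a i0).
  by rewrite /A (side_leaf (valP (a i0)) (ev 0 tn)) inE (inj_eq val_inj).
have An (l : leafT e) : (val l \in A n.-1) = (l != b i0).
  rewrite (compAB n.-1); last lia.
  rewrite /B prednK // vn (side_leaf (valP (b i0))) ?inE ?(inj_eq val_inj) //.
  by rewrite -vn esym -{2}(prednK tn); apply: ev; lia.
have same j i : j < n -> i != i0 -> (val (a i) \in A j) = (val (b i) \in A j).
  move=> jn nii; have [_ [ti [Pi [pti [_ lti]]]]] := hlp i.
  have pr : path (rm (v j) (v j.+1)) (val (a i)) ti.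
    apply: path_rm pti _ => uv uvin; apply/negP => /orP [] /andP [/eqP E1 /eqP E2].
      have ei : edge_of (P i) (v j) (v j.+1).
        by rewrite /edge_of Pi /= -E1 -E2 -surjective_pairing uvin.
      by have := hdisj nii (v j) (v j.+1); rewrite ei edgeX.
    have ei : edge_of (P i) (v j) (v j.+1).
      by rewrite /edge_of Pi /= -E1 -E2 -surjective_pairing uvin orbT.
    by have := hdisj nii (v j) (v j.+1); rewrite ei edgeX.
  have cab : connect (rm (v j) (v j.+1)) (val (a i)) (val (b i)).
    by apply/connectP; exists ti.
  have sc := sym_connect_sym (@rm_sym (v j) (v j.+1)).
  rewrite !inE; apply/idP/idP => H; first exact: connect_trans H cab.
  by apply: connect_trans H _; rewrite sc.
have parity j : j < n -> odd #|[set l : leafT e | val l \in A j]|.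
  move=> jn; rewrite -sum1_card big_mkcond /=.
  rewrite (reindex ep); last exact: onW_bij ep_bij.
  set G := (fun ic : 'I_k * bool => if ep ic \in [set l : leafT e | val l \in A j] then 1 else 0).
  rewrite (eq_bigr (fun p => (fun i c => G (i, c)) p.1 p.2)); last by case.
  rewrite -(pair_bigA _ (fun i c => G (i, c))) /= /G.
  rewrite (bigD1 i0) //= big_bool /=.
  have -> : (ep (i0, true) \in [set l : leafT e | val l \in A j]) = false.
    by rewrite inE; apply/negbTE; rewrite compAB // negbK yB.
  have -> : (ep (i0, false) \in [set l : leafT e | val l \in A j]) = true by rewrite inE; apply: xA.
  rewrite (eq_bigr (fun i => 2 * (val (a i) \in A j))); last first.
    move=> i nii; rewrite big_bool /= !in_set /ep /=.
    have := same j i jn nii; rewrite /A /side !in_set => ->.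
    by case: (connect _ _ _).
  by rewrite -big_distrr /= mul2n oddD odd_double.
set c := f (a i0).
have cnt_le c' S : cnt c' S <= k by rewrite -(cnt_split c' S) leq_addr.
pose good j := cnt (~~ c) (A j) < cnt c (A j).
have g0 : good 0.
  rewrite /good.
  have -> : cnt c (A 0) = 1.
    have S1 : [set l : leafT e | (f l == c) && (val l \in A 0)] = [set a i0].
      apply/setP => l; rewrite in_set A0 ?inE.
      by case: (eqVneq l (a i0)) => [->|ne]; rewrite ?eqxx ?andbT ?(negbTE ne) ?andbF.
    by rewrite /cnt S1 cards1.
  have -> : cnt (~~ c) (A 0) = 0.
    have S1 : [set l : leafT e | (f l == ~~ c) && (val l \in A 0)] = set0.
      apply/setP => l; rewrite in_set A0 ?inE.
      by case: (eqVneq l (a i0)) => [->|ne]; rewrite ?(negbTE ne) ?andbF ?andbT // /c; case: (f (a i0)).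
    by rewrite /cnt S1 cards0.
  by [].
have gn : ~~ good n.-1.
  have E1 : cnt c (~: A n.-1) = 1.
    have S1 : [set l : leafT e | (f l == c) && (val l \in ~: A n.-1)] = [set b i0].
      apply/setP => l; rewrite in_set in_setC An negbK ?inE.
      by case: (eqVneq l (b i0)) => [->|ne]; rewrite /c fab ?eqxx ?andbT ?(negbTE ne) ?andbF.
    by rewrite /cnt S1 cards1.
  have E2 : cnt (~~ c) (~: A n.-1) = 0.
    have S1 : [set l : leafT e | (f l == ~~ c) && (val l \in ~: A n.-1)] = set0.
      apply/setP => l; rewrite in_set in_setC An negbK ?inE.
      by case: (eqVneq l (b i0)) => [->|ne]; rewrite ?(negbTE ne) ?andbF ?andbT // /c fab; case: (f (b i0)).
    by rewrite /cnt S1 cards0.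
  have := cnt_split c (A n.-1); have := cnt_split (~~ c) (A n.-1).
  rewrite E1 E2 /good; lia.
have [j [jm gj ngj]] := search g0 gn.
have jn : j.+1 < n by lia.
have lt1 : cnt c (A j.+1) < cnt (~~ c) (A j.+1).
  have ne : cnt c (A j.+1) != cnt (~~ c) (A j.+1).
    apply/eqP => E; have := parity j.+1 jn; rewrite -cnt_tot.
    have -> : cnt true (A j.+1) + cnt false (A j.+1) = cnt c (A j.+1) + cnt (~~ c) (A j.+1).
      by case: (c) => //; rewrite addnC.
    by rewrite E addnn odd_double.
  move: ngj ne; rewrite /good; lia.
pose w := v j.+1.
pose W' := A j :|: [set w] :|: B j.+1.
have wleaf (l : leafT e) : (val l == w) = false.
  apply/negbTE/eqP => E; have := nleaf j.+1; rewrite jn -/w -E (valP l).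
  by move/(_ isT).
have cntW c' : cnt c' W' = cnt c' (A j) + (k - cnt c' (A j.+1)).
  have -> : cnt c' W' = cnt c' (A j) + cnt c' (B j.+1).
    rewrite /cnt -cardsUI.
    have -> : [set l : leafT e | (f l == c') && (val l \in A j)] :&: [set l | (f l == c') && (val l \in B j.+1)] = set0.
      apply/setP => l; rewrite !inE; apply/negbTE; apply/negP => /andP [/andP [_ H1] /andP [_ H2]].
      have H1' : val l \in A j by rewrite inE.
      have H2' : val l \in B j.+1 by rewrite inE.
      exact: dis j.+1 _ jn (monoA j jn _ H1') H2'.
    rewrite cards0 addn0; apply: eq_card => l; rewrite !inE wleaf orbF.
    by case: (f l == c').
  congr (_ + _); rewrite -(cnt_split c' (A j.+1)) addKn.
  by apply: cnt_ext => l; rewrite in_setC (compAB j.+1) // negbK.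
have vjW : v j \in W' by rewrite !inE connect0.
have wW : v j.+1 \in W' by rewrite !inE eqxx orbT.
have vj2W : v j.+2 \in W' by rewrite !inE connect0 !orbT.
have key p q : e p q -> p \in W' -> q \notin W' -> [/\ p = w, q != v j & q != v j.+2].
  move=> epq pW qW.
  move: pW; rewrite /W' !in_setU in_set1 => /orP [/orP [pA|/eqP pw]|pB].
  - exfalso; case E: (((p == v j) && (q == v j.+1)) || ((p == v j.+1) && (q == v j))).
      by case/orP: E => /andP [_ /eqP qq]; move: qW; rewrite qq ?vjW ?wW.
    have qA : q \in A j := side_step pA epq (negbT E).
    by move: qW; rewrite /W' !in_setU qA.
  - split => //; apply/eqP => qv; move: qW; by rewrite qv ?vjW ?vj2W.
  - exfalso; case E: (((p == v j.+2) && (q == v j.+1)) || ((p == v j.+1) && (q == v j.+2))).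
      by case/orP: E => /andP [_ /eqP qq]; move: qW; rewrite qq ?vj2W ?wW.
    have qB : q \in B j.+1 := side_step pB epq (negbT E).
    by move: qW; rewrite /W' !in_setU qB orbT.
have bdW : #|bd W'| <= 1.
  pose N := [set z | e w z && (z != v j) && (z != v j.+2)].
  have sub : bd W' \subset [set [set w; z] | z in N].
    apply/subsetP => E; rewrite inE => /andP [Eed /existsP [u /andP [uE /existsP [u' /andP [u'E duu]]]]].
    move: Eed => /imsetP [[x1 x2] /= ex0 EE]; subst E.
    have ex : e x1 x2 := ex0.
    have d12 : (x1 \in W') != (x2 \in W').
      apply: contraNneq duu => dd.
      by move: uE u'E; rewrite !in_set2 => /orP [] /eqP -> /orP [] /eqP ->; rewrite ?dd.
    case: (boolP (x1 \in W')) d12 => x1W /= x2W.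
      have [x1w n1 n2] := key x1 x2 ex x1W x2W.
      by apply/imsetP; exists x2; rewrite ?inE -?x1w ?ex ?n1 ?n2 ?x1w.
    have x2W' : x2 \in W' by move: x2W; case: (x2 \in W').
    have ex2 : e x2 x1 by rewrite esym.
    have [x2w n1 n2] := key x2 x1 ex2 x2W' x1W.
    apply/imsetP; exists x1; first by rewrite !inE -x2w esym ex n1 n2.
    by rewrite -x2w setUC.
  apply: leq_trans (subset_leq_card sub) _; apply: leq_trans (leq_imset_card _ _) _.
  have ew1 : e w (v j) by rewrite esym; exact: (ev j (ltnW jn)).
  have ew2 : e w (v j.+2) by exact: (ev j.+1 jn).
  have ne : v j != v j.+2.
    rewrite vinj; first by rewrite ltn_eqF // ltnS leqnSn.
      by apply: ltnW; apply: ltnW; exact: jn.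
    exact: jn.
  have : #|N :|: [set v j; v j.+2]| <= 3.
    apply: leq_trans (deg3 w); apply: subset_leq_card; apply/subsetP => z.
    rewrite !inE => /orP [/andP [/andP [-> _] _] //|/orP [] /eqP -> //].
  rewrite cardsU cards2 ne.
  have -> : N :&: [set v j; v j.+2] = set0.
    apply/setP => z; rewrite !inE; case: (eqVneq z (v j)) => [->|]; rewrite ?eqxx ?andbF //=.
    by case: (eqVneq z (v j.+2)) => [->|]; rewrite ?eqxx ?andbF ?andbT.
  by rewrite cards0 subn0 => H; rewrite -(leq_add2r 2); exact: H.
have cT := cntW true; have cF := cntW false.
have sT := cnt_split true W'; have sF := cnt_split false W'.
have l1 := cnt_le true (A j); have l2 := cnt_le false (A j).
have l3 := cnt_le true (A j.+1); have l4 := cnt_le false (A j.+1).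
move: gj lt1; rewrite /good; clear ngj gn g0 good; clearbody c; case: c => /= gj lt1.
  exists (gW f W'); split; first exact: gW_ext.
  apply: leq_ltn_trans (changes_gW f W') _; rewrite bad_cnt.
  apply: (fin_arith (TW := cnt true W') (Tj := cnt true (A j)) (T1 := cnt true (A j.+1)) (Fj := cnt false (A j)) (F1 := cnt false (A j.+1))) => //.
exists (gW f (~: W')); split; first exact: gW_ext.
apply: leq_ltn_trans (changes_gW f (~: W')) _; rewrite bad_cnt bdC setCK [_ + cnt false _]addnC.
apply: (fin_arith (TW := cnt false W') (Tj := cnt false (A j)) (T1 := cnt false (A j.+1)) (Fj := cnt true (A j)) (F1 := cnt true (A j.+1))) => //.
Qed.

End Main.

Lemma score_fchar p : pscore (fchar a b p) = k.
Proof.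
apply/eqP; rewrite eqn_leq; apply/andP; split.
  apply: leq_trans (pscore_le (gW_ext (fchar a b p) set0)) _.
  apply: leq_trans (changes_gW _ _) _.
  have -> : bd set0 = set0.
    apply/setP => E; rewrite !inE; apply/negbTE; apply/nandP; right.
    by apply/existsP => [[u /andP [_ /existsP [v /andP [_]]]]]; rewrite !inE.
  have E := fchar_true p.
  rewrite cards0 add0n -[X in _ <= X]E; apply: eq_leq; apply: eq_card => l; rewrite !inE.
  by case: (fchar a b p l).
apply: pscore_ge; last by exists (gW (fchar a b p) set0); exact: gW_ext.
move=> g gf; apply: leq_trans (lower_bound gf).
have -> : [set i | fchar a b p (a i) != fchar a b p (b i)] = setT.
  by apply/setP => i; rewrite !inE fchar_a fchar_b; case: (p i).
by rewrite cardsT card_ord.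
Qed.

Lemma main_result : 1 <= k -> injective (fchar a b) /\
  (forall f : {ffun leafT e -> bool}, pscore f = k <-> exists p, fchar a b p = f).
Proof.
move=> k1; split; first exact: fchar_inj.
move=> f; split; last by case=> p <-; exact: score_fchar.
move=> hs.
have u1 : pscore f <= #|[set l | f l]|.
  apply: leq_trans (pscore_le (gW_ext f set0)) _.
  apply: leq_trans (changes_gW _ _) _.
  have -> : bd set0 = set0.
    apply/setP => E; rewrite !inE; apply/negbTE; apply/nandP; right.
    by apply/existsP => [[u /andP [_ /existsP [v /andP [_]]]]]; rewrite !inE.
  rewrite cards0 add0n; apply: subset_leq_card; apply/subsetP => l; rewrite !inE.
  by case: (f l).
have u2 : pscore f <= #|[set l | ~~ f l]|.
  apply: leq_trans (pscore_le (gW_ext f setT)) _.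
  apply: leq_trans (changes_gW _ _) _.
  have -> : bd setT = set0.
    apply/setP => E; rewrite !inE; apply/negbTE; apply/nandP; right.
    by apply/existsP => [[u /andP [_ /existsP [v /andP [_]]]]]; rewrite !inE.
  rewrite cards0 add0n; apply: subset_leq_card; apply/subsetP => l; rewrite !inE.
  by case: (f l).
have tot : #|[set l | f l]| + #|[set l | ~~ f l]| = 2 * k.
  rewrite -hcard -cardsT -(cardsID [set l : leafT e | f l] setT) setTI; congr (_ + _).
  by apply: eq_card => l; rewrite !inE andbT.
have hT : #|[set l | f l]| = k by lia.
have hF : #|[set l | ~~ f l]| = k by lia.
have spl i : f (a i) != f (b i).
  apply/negP => /eqP fab.
  have [g [gf gk]] := construct hT hF fab.
  by have := leq_ltn_trans (pscore_le gf) gk; rewrite hs ltnn.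
exists [ffun i => f (b i)]; apply/ffunP => l.
have [[i c] ->] := ep_surj l; case: c; rewrite /ep /= ?fchar_a ?fchar_b ffunE //.
by have := spl i; case: (f (a i)); case: (f (b i)).
Qed.

End Big.

Unset Implicit Arguments.
Set Strict Implicit.

Theorem lemma6 (V : finType) (e : rel V) (k : nat)
  (a b : 'I_k -> leafT e) (P : 'I_k -> seq V) :
  1 <= k ->
  binary_phylo_tree e ->
  #|{: leafT e}| = 2 * k ->
  (forall i, leaf_path (P i) (a i) (b i)) ->
  (forall i j, i != j -> forall u v, ~~ (edge_of (P i) u v && edge_of (P j) u v)) ->
  injective (fchar a b) /\
  (forall f : {ffun leafT e -> bool}, pscore f = k <-> exists p, fchar a b p = f).
Proof.
move=> k1 [[[esym eirr] [conn acyc]] [_ deg3]] hcard hlp hdisj.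
by apply: main_result.
Qed.
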